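(* Let $G$ be a threshold graph with an odd number of vertices. If $h(\mathrm{seq}(G))=0$, then $G$ has a near-perfect matching, i.e., a matching covering all vertices but one.
   Context: A threshold graph on $n\ge1$ vertices is built from a base vertex $v_0$ by successively adding $v_1,\dots,v_{n-1}$, each either isolated (adjacent to no earlier vertex) or dominating (adjacent to all earlier vertices); its creation sequence $\mathrm{seq}(G)=s_1\cdots s_{n-1}$ has $s_i=1$ if $v_i$ is dominating and $s_i=0$ otherwise. For a binary string $s=s_1\cdots s_m$ and $0\le k\le m$, the $k$-th tail is $s_{m-k+1}\cdots s_m$ (empty for $k=0$); $z_k(s)$, $u_k(s)$ are the numbers of zeros and ones in it, and $h(s)=\max_{0\le k\le m}\{z_k(s)-u_k(s)\}$. *)

(* Defs.v *)
From mathcomp Require Import all_boot all_order all_algebra.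
Set Implicit Arguments. Unset Strict Implicit. Unset Printing Implicit Defensive.
Import Order.TTheory GRing.Theory Num.Theory.

(* Creation sequence s = s_1 ... s_{n-1} as a seq bool (true = 1 = dominating);
   s_i is [nth false s i.-1]. *)

Definition tail_k (s : seq bool) (k : nat) : seq bool := drop (size s - k) s.

Definition zk (s : seq bool) (k : nat) : nat := count negb (tail_k s k).
Definition uk (s : seq bool) (k : nat) : nat := count id (tail_k s k).

Definition hseq (s : seq bool) : int :=
  \big[Num.max/0%R]_(k < (size s).+1) ((zk s k)%:Z - (uk s k)%:Z)%R.

(* Threshold graph on vertices v_0..v_{n-1} (= 'I_n) with creation sequence s:
   for i < j, v_i v_j is an edge iff v_j is dominating, i.e. s_j = 1. *)
Definition tg_adj (n : nat) (s : seq bool) : rel 'I_n :=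
  fun i j => (i != j) &&
    (if (i < j)%N then nth false s (j.-1) else nth false s (i.-1)).

Definition is_matching (T : finType) (adj : rel T) (M : {set {set T}}) : bool :=
  trivIset M &&
  [forall e in M, exists x, exists y, (e == [set x; y]) && adj x y].

Definition near_perfect_matching (T : finType) (adj : rel T) (M : {set {set T}}) : Prop :=
  is_matching adj M /\ exists v : T, cover M = [set~ v].

(* Main.v *)
Require Import Defs.
From mathcomp Require Import all_boot all_order all_algebra.
From mathcomp Require Import zify.
Import Order.TTheory GRing.Theory Num.Theory.
Set Implicit Arguments. Unset Strict Implicit. Unset Printing Implicit Defensive.

Definition lab (s : seq bool) (i : nat) : bool := (i == 0) || nth false s i.-1.

Lemma adj_lab n s (i j : 'I_n) : (i < j)%N -> tg_adj s i j = lab s j.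
Proof.
move=> H; rewrite /tg_adj H.
have -> : i != j by apply/eqP => E; rewrite E ltnn in H.
by rewrite /lab (gtn_eqF (leq_ltn_trans (leq0n i) H)).
Qed.

Definition cond n s (S : {set 'I_n}) := forall t : nat,
  #|[set i in S | (t <= i) && ~~ lab s i]| <= #|[set i in S | (t <= i) && lab s i]|.

Lemma card_rem2 (T : finType) (S : {set T}) x y (P : pred T) : x != y ->
  #|[set i in S | P i]| = #|[set i in S :\ x :\ y | P i]| + ((x \in S) && P x) + ((y \in S) && P y).
Proof.
move=> nxy.
rewrite (cardsD1 x [set i in S | P i]) (cardsD1 y ([set i in S | P i] :\ x)).
have -> : [set i in S | P i] :\ x :\ y = [set i in S :\ x :\ y | P i].
  by apply/setP => i; rewrite !inE; case: (i == y); case: (i == x); case: (i \in S).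
rewrite !inE (negbTE (_ : y != x)) 1?eq_sym //=.
case: (x \in S) (P x) (y \in S) (P y) => [] [] [] [] /=; lia.
Qed.

Definition good n s (S : {set 'I_n}) :=
  exists M : {set {set 'I_n}}, is_matching (@tg_adj n s) M /\ exists2 v, v \in S & cover M = S :\ v.

Lemma step n s (S : {set 'I_n}) (x y : 'I_n) : (x < y)%N -> x \in S -> y \in S -> lab s y ->
  good s (S :\ x :\ y) -> good s S.
Proof.
move=> xy xS yS ly [M [/andP [tM /forallP allM] [v vS cM]]].
have nxy : x != y by apply/eqP => E; rewrite E ltnn in xy.
have sub : forall B, B \in M -> B \subset S :\ x :\ y.
  move=> B BM; apply: subset_trans (_ : B \subset cover M) _.
    exact: (bigcup_sup B BM).
  by rewrite cM subD1set.
exists ([set [set x; y]] :|: M); split.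
  apply/andP; split.
    apply: trivIsetU => //; first exact: trivIset1.
    rewrite /cover big_set1 -/(cover M) cM; rewrite disjoints_subset; apply/subsetP => z; rewrite !inE.
    by case/orP => /eqP ->; rewrite eqxx ?andbF.
  apply/forallP => e; apply/implyP; rewrite inE => /orP [].
    by rewrite inE => /eqP ->; apply/existsP; exists x; apply/existsP; exists y;
       rewrite eqxx adj_lab.
  by move=> eM; apply: (implyP (allM e)).
exists v.
  by move: vS; rewrite !inE => /andP [_ /andP [_ ->]].
rewrite /cover bigcup_setU big_set1 -/(cover M) cM.
apply/setP => z; rewrite !inE.
have vx : v != x by move: vS; rewrite !inE => /and3P [].
have vy : v != y by move: vS; rewrite !inE => /and3P [].
case: (eqVneq z x) => [->|zx]; first by rewrite /= xS (eq_sym x v) vx.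
case: (eqVneq z y) => [->|zy]; first by rewrite /= yS (eq_sym y v) vy ?orbT.
by [].
Qed.

Lemma card_S2 n (S : {set 'I_n}) (x y : 'I_n) : x != y -> x \in S -> y \in S ->
  #|S| = #|S :\ x :\ y| + 2.
Proof.
move=> nxy xS yS; rewrite (cardsD1 x S) (cardsD1 y (S :\ x)) xS !inE yS eq_sym nxy /=.
by rewrite addnA addnC.
Qed.

Lemma main_ind n s k : forall S : {set 'I_n}, #|S| = k.*2.+1 -> cond s S -> good s S.
Proof.
elim: k => [|k IH] S cS hc.
  have /cards1P [v ->] : #|S| == 1 by rewrite cS.
  exists set0; split.
    apply/andP; split; first by apply/trivIsetP => A B; rewrite in_set0.
    by apply/forallP => e; rewrite in_set0.
  by exists v; rewrite ?in_set1 // /cover big_set0 setDv.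
case: (boolP [exists x in S, ~~ lab s x]) => [hex | hno].
  have hb : forall m, [exists x in S, ~~ lab s x && (val x == m)] -> m <= n.
    by move=> m /exists_inP [x _ /andP [_ /eqP <-]]; apply: ltnW; apply: ltn_ord.
  have hex' : exists m, [exists x in S, ~~ lab s x && (val x == m)].
    move/exists_inP: hex => [x xS zx]; exists (val x); apply/exists_inP; exists x => //.
    by rewrite zx eqxx.
  have [m Pm maxm] := ex_maxnP hex' hb.
  move/exists_inP: Pm => [x xS /andP [zx /eqP xm]]; subst m.
  have hA : 0 < #|[set i in S | (x <= i) && ~~ lab s i]|.
    by apply/card_gt0P; exists x; rewrite inE xS leqnn zx.
  have /card_gt0P [y] := leq_trans hA (hc x).
  rewrite inE => /and3P [yS xy ly].
  have xy' : x < y.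
    rewrite ltn_neqAle xy andbT; apply/eqP => E.
    by move: zx; rewrite E ly.
  have nxy : x != y by apply/eqP => E; rewrite E ltnn in xy'.
  apply: (step xy' xS yS ly); apply: IH.
    by move: cS; rewrite (card_S2 nxy xS yS) => /eqP; rewrite doubleS !addn2 !eqSS => /eqP.
  move=> t.
  have e1 : #|[set i in S | (t <= i) && ~~ lab s i]| =
     #|[set i in S :\ x :\ y | (t <= i) && ~~ lab s i]| + ((x \in S) && ((t <= x) && ~~ lab s x))
     + ((y \in S) && ((t <= y) && ~~ lab s y)) := card_rem2 S (fun i => (t <= i) && ~~ lab s i) nxy.
  have e2 : #|[set i in S | (t <= i) && lab s i]| =
     #|[set i in S :\ x :\ y | (t <= i) && lab s i]| + ((x \in S) && ((t <= x) && lab s x))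
     + ((y \in S) && ((t <= y) && lab s y)) := card_rem2 S (fun i => (t <= i) && lab s i) nxy.
  move: e1 e2 (hc t); rewrite xS yS ly (negbTE zx) /= !andbF !andbT.
  case: (leqP t x) => tx.
    by rewrite (leq_trans tx (ltnW xy')) /= !addn0 !addn1 => -> ->; rewrite ltnS.
  have -> : #|[set i in S | (t <= i) && ~~ lab s i]| = 0.
    apply/eqP; rewrite cards_eq0; apply/eqP/setP => i; rewrite !inE.
    apply/negbTE/negP => /and3P [iS ti zi].
    have : i <= x by apply: maxm; apply/exists_inP; exists i => //; rewrite zi eqxx.
    by move=> ix; have := leq_ltn_trans ix (leq_trans tx ti); rewrite ltnn.
  by rewrite /= !addn0 => <-.
have allS : forall i, i \in S -> lab s i.
  by move=> i iS; apply/negPn/negP => zi; move/negP: hno; apply; apply/exists_inP; exists i.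
have key : forall x y : 'I_n, x \in S -> y \in S -> x < y -> good s S.
  move=> x y xS yS xy.
  have nxy : x != y by apply/eqP => E; rewrite E ltnn in xy.
  apply: (step xy xS yS (allS _ yS)); apply: IH.
    by move: cS; rewrite (card_S2 nxy xS yS) => /eqP; rewrite doubleS !addn2 !eqSS => /eqP.
  move=> t.
  have -> : #|[set i in S :\ x :\ y | (t <= i) && ~~ lab s i]| = 0.
    apply/eqP; rewrite cards_eq0; apply/eqP/setP => i; rewrite !inE.
    apply/negbTE/negP => /andP [/andP [_ /andP [_ iS]] /andP [_ zi]].
    by move: zi; rewrite allS.
  by [].
have : 0 < #|S| by rewrite cS.
move/card_gt0P => [x xS].
have : 0 < #|S :\ x| by move: cS; rewrite (cardsD1 x) xS add1n doubleS => [[->]].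
move/card_gt0P => [y]; rewrite !inE => /andP [yx yS].
case: (ltngtP x y) => [xy|yx'|e]; first exact: key xy.
  exact: key yx'.
by move: yx; rewrite (val_inj e) eqxx.
Qed.

Lemma count_ge t (f : pred nat) m k :
  count (fun i => (t <= i) && f i) (iota m k) = count f (drop (t - m) (iota m k)).
Proof.
elim: k m => [|k IH] m; first by case: (t - m).
rewrite /= IH.
case: (leqP t m) => tm.
  have -> : t - m = 0 by lia.
  have -> : t - m.+1 = 0 by lia.
  by rewrite !drop0.
have -> : t - m = (t - m.+1).+1 by lia.
by [].
Qed.

Lemma card_setT_pred n (P : pred nat) :
  #|[set i in [set: 'I_n] | P i]| = count P (iota 0 n).
Proof.
rewrite -sum1_card.
rewrite (eq_bigl (fun i : 'I_n => P i)); last by move=> i; rewrite !inE.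
by rewrite -(big_mkord P (fun _ => 1)) sum1_count /index_iota subn0.
Qed.

Lemma map_lab s : map (lab s) (iota 0 (size s).+1) = true :: s.
Proof.
rewrite /= /lab eqxx /=; congr (_ :: _).
rewrite -(addn0 1) iotaDl -map_comp.
rewrite (eq_map (_ : lab s \o addn 1 =1 nth false s)); last by move=> i; rewrite /= /lab add1n.
by rewrite map_nth_iota0 // take_size.
Qed.

Lemma cond_T s (Hk : forall k, k <= size s -> zk s k <= uk s k) :
  cond s [set: 'I_(size s).+1].
Proof.
move=> t.
rewrite (@card_setT_pred _ (fun i => (t <= i) && ~~ lab s i)).
rewrite (@card_setT_pred _ (fun i => (t <= i) && lab s i)).
rewrite !count_ge subn0.
have -> : count (fun i => ~~ lab s i) (drop t (iota 0 (size s).+1))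
    = count negb (drop t (map (lab s) (iota 0 (size s).+1))) by rewrite -map_drop count_map.
have -> : count (fun i => lab s i) (drop t (iota 0 (size s).+1))
    = count id (drop t (map (lab s) (iota 0 (size s).+1))) by rewrite -map_drop count_map.
rewrite map_lab.
case: t => [|t].
  have := Hk (size s) (leqnn _); rewrite /zk /uk /tail_k subnn drop0 /=.
  by move=> H; apply: (leq_trans H); apply: leq_addl.
rewrite drop_cons.
case: (leqP t (size s)) => ts.
  have := Hk (size s - t) (leq_subr _ _); rewrite /zk /uk /tail_k.
  by rewrite subKn.
by rewrite drop_oversize ?(ltnW ts).
Qed.

Theorem mainTheorem5 (n : nat) (s : seq bool) :
  odd n -> size s = n.-1 -> hseq s = 0%R ->
  exists M : {set {set 'I_n}}, near_perfect_matching (@tg_adj n s) M.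
Proof.
move=> on sz h.
have n0 : 0 < n by case: n on {sz h}.
have n1 : n = (size s).+1 by rewrite sz prednK.
have Hk : forall k, k <= size s -> zk s k <= uk s k.
  move=> k kle.
  have := le_bigmax 0%R (fun k : 'I_(size s).+1 => ((zk s k)%:Z - (uk s k)%:Z)%R) (Ordinal (kle : k < (size s).+1)).
  move: h; rewrite /hseq => -> /=.
  by rewrite subr_le0 lez_nat.
subst n.
have [M [mM [v _ cM]]] : good s [set: 'I_(size s).+1].
  apply: (@main_ind _ s (size s)./2); last exact: cond_T.
  rewrite cardsT card_ord.
  move: on => /=; rewrite -[in X in _ = X]addn1 -addn1 -[X in X + 1](odd_double_half (size s)).
  by move=> /negbTE ->; rewrite add0n.
exists M; split => //.
by exists v; rewrite cM setTD.
Qed.
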